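(* Let $N\ge 3$ be an integer, let $\Delta\theta^*=2\pi/N$, and let $P\neq 0$ be a real constant. Let $(\theta_k)_{k\ge1}$ and $(\omega_k)_{k\ge1}$ be real sequences with $\omega_k>0$ for all $k$, satisfying for every $k\ge 1$ $$\theta_{k+1}=\theta_k+\Delta\theta^*,\qquad \omega_{k+1}-\omega_k=P\sin\theta_k\left[\frac{1}{\omega_k}+\frac{1}{\omega_{k+1}}\right],$$ and the assumption $\omega_k^2>|P|$ for every $k\ge1$. If $\theta_1=\Delta\theta^*/2$, then the solution is periodic with period $N$: for every $k\ge1$, $\theta_{k+N}=\theta_k+2\pi$ and $\omega_{k+N}=\omega_k$.
   Context: This is the ''discrete zero dynamics'' of a devil-stick with parameter $\phi=\pm\pi/2$; in the paper $P=\frac{g(\Delta\theta^* )^2}{2R\sin(\Delta\theta^* )}$ if $\phi=-\pi/2$ and $P=-\frac{g(\Delta\theta^* )^2}{2R\sin(\Delta\theta^* )}$ if $\phi=\pi/2$, where $g>0$ and $R>0$ are constants. The hypothesis $\omega_k^2>|P|$ for all $k$ is the paper's Assumption 1. *)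

(* Defs.v *)
From Stdlib Require Import Reals.

(* Main.v *)
Require Import Defs.
From Stdlib Require Import Reals Lra Lia Psatz.
Open Scope R_scope.

Lemma inj_aux (x y c Q : R) : 0 < x -> 0 < y -> x ^ 2 > Q -> y ^ 2 > Q -> 0 <= Q ->
  Rabs c <= Q -> x + c * / x = y + c * / y -> x = y.
Proof.
  intros Hx Hy Hx2 Hy2 HQ Hc He.
  assert (Hxy : x * y > Q).
  { destruct (Rle_dec (x*y) Q) as [h|h]; [|lra].
    assert (x*y*(x*y) <= Q*Q) by (apply Rmult_le_compat; nra).
    nra. }
  assert (Hc2 : c <= Rabs c) by apply Rle_abs.
  assert (H2 : (x + c * / x) * (x * y) = (y + c * / y) * (x * y)) by (rewrite He; ring).
  replace ((x + c * / x) * (x * y)) with (x*x*y + c*y) in H2 by (field; lra).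
  replace ((y + c * / y) * (x * y)) with (x*y*y + c*x) in H2 by (field; lra).
  assert (H3 : (x - y) * (x*y - c) = 0) by lra.
  apply Rmult_integral in H3. destruct H3; lra.
Qed.

Lemma sin_bound_abs (P s : R) : Rabs (P * sin s) <= Rabs P.
Proof.
  rewrite Rabs_mult. pose proof (Rabs_pos P).
  assert (Rabs (sin s) <= 1) by (apply Rabs_le; apply SIN_bound).
  nra.
Qed.

Theorem lemma2 (N : nat) (P : R) (theta omega : nat -> R) :
  (3 <= N)%nat ->
  P <> 0 ->
  (forall k, (1 <= k)%nat -> 0 < omega k) ->
  (forall k, (1 <= k)%nat -> theta (S k) = theta k + 2 * PI / INR N) ->
  (forall k, (1 <= k)%nat ->
     omega (S k) - omega k = P * sin (theta k) * (/ omega k + / omega (S k))) ->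
  (forall k, (1 <= k)%nat -> omega k ^ 2 > Rabs P) ->
  theta 1%nat = (2 * PI / INR N) / 2 ->
  forall k, (1 <= k)%nat ->
    theta (k + N)%nat = theta k + 2 * PI /\ omega (k + N)%nat = omega k.
Proof.
  intros HN HP Hpos Hth Hrec Hbig H1.
  set (d := 2 * PI / INR N) in *.
  assert (HNpos : 0 < INR N) by (apply lt_0_INR; lia).
  assert (HNd : INR N * d = 2 * PI) by (unfold d; field; lra).
  assert (Hcl : forall k, (1 <= k)%nat -> theta k = (INR k - 1/2) * d).
  { induction k as [|k IH]; intros Hk; [lia|].
    destruct (Nat.eq_dec k 0) as [->|Hk0].
    - rewrite H1. simpl. field.
    - rewrite Hth by lia. rewrite IH by lia. rewrite S_INR. ring. }
  assert (HR : forall k, (1 <= k)%nat ->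
     omega (S k) - (P * sin (theta k)) * / omega (S k)
     = omega k + (P * sin (theta k)) * / omega k).
  { intros k Hk. pose proof (Hrec k Hk). lra. }
  assert (HQ : 0 <= Rabs P) by apply Rabs_pos.
  assert (Hsym : forall m, (forall a, (1 <= a)%nat -> (a + (a + m) = N + 2)%nat ->
                        omega a = omega (a + m)%nat) /\
                       (forall a, (1 <= a)%nat -> (a + (a + S m) = N + 2)%nat ->
                        omega a = omega (a + S m)%nat)).
  { induction m as [|m [IH0 IH1]].
    - split.
      + intros a _ _. rewrite Nat.add_0_r. reflexivity.
      + intros a Ha Heq.
        assert (Hs : sin (theta a) = 0).
        { rewrite Hcl by lia.
          assert (HNa : INR N = 2 * INR a - 1).
          { assert (N = 2 * a - 1)%nat as -> by lia.
            rewrite minus_INR by lia. rewrite mult_INR. simpl. ring. }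
          replace ((INR a - 1/2) * d) with PI.
          - apply sin_PI.
          - unfold d. rewrite HNa. field. lra. }
        pose proof (Hrec a Ha) as R. rewrite Hs in R.
        replace (a + 1)%nat with (S a) by lia. lra.
    - split; [exact IH1|].
      intros a Ha Heq.
      assert (Hin : omega (S a) = omega (S a + m)%nat) by (apply IH0; lia).
      set (b := (S a + m)%nat) in *.
      assert (Hsb : sin (theta b) = - sin (theta a)).
      { rewrite !Hcl by lia.
        assert (HNa : INR N = 2 * INR a + INR m).
        { assert (N = 2 * a + m)%nat as -> by lia.
          rewrite !plus_INR, mult_INR. simpl. ring. }
        unfold b. rewrite plus_INR, !S_INR.
        replace ((INR a + 1 + INR m - 1/2) * d)
          with (- ((INR a - 1/2) * d) + 2 * PI).
        - rewrite <- sin_neg. rewrite sin_plus, sin_2PI, cos_2PI. ring.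
        - rewrite <- HNd, HNa. unfold d. field. lra. }
      replace (a + S (S m))%nat with (S b) by (unfold b; lia).
      pose proof (HR a Ha) as Ra.
      assert (Hb1 : (1 <= b)%nat) by (unfold b; lia).
      pose proof (HR b Hb1) as Rb. rewrite Hsb in Rb.
      symmetry.
      apply (inj_aux (omega (S b)) (omega a) (P * sin (theta a)) (Rabs P));
        try (apply Hpos || apply Hbig); try lia; auto.
      + apply sin_bound_abs.
      + rewrite <- Hin in Rb. lra. }
  assert (Hth_cl : forall k, (1 <= k)%nat -> theta (k + N)%nat = theta k + 2 * PI).
  { intros k Hk. rewrite !Hcl by lia. rewrite plus_INR. rewrite <- HNd. ring. }
  intros k Hk. split; [apply Hth_cl; exact Hk|].
  induction k as [|k IH]; [lia|].
  destruct (Nat.eq_dec k 0) as [->|Hk0].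
  - simpl. destruct (Hsym N) as [A _].
    pose proof (A 1%nat ltac:(lia) ltac:(lia)) as E.
    replace (1 + N)%nat with (S N) in E by lia. symmetry. exact E.
  - assert (IHk : omega (k + N)%nat = omega k) by (apply IH; lia).
    pose proof (HR k ltac:(lia)) as Rk.
    pose proof (HR (k + N)%nat ltac:(lia)) as RkN.
    rewrite (Hth_cl k ltac:(lia)) in RkN.
    replace (sin (theta k + 2 * PI)) with (sin (theta k)) in RkN
      by (rewrite sin_plus, sin_2PI, cos_2PI; ring).
    rewrite IHk in RkN.
    replace (S k + N)%nat with (S (k + N)) by lia.
    apply (inj_aux _ _ (- (P * sin (theta k))) (Rabs P));
      try (apply Hpos || apply Hbig); try lia; auto.
    + rewrite Rabs_Ropp. apply sin_bound_abs.
    + lra.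
Qed.
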